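(* In the social learning model, assume there exist $c>0$, $k>0$ and $x_0>0$ such that $G_-(-x)=c\,x^{-k}$ and $G_+(x)=1-c\,x^{-k}$ for all $x>x_0$. Then there exists $\kappa>0$ such that for all $t\ge1$, $$\mathbb{P}_+(a_t=-1)<\kappa\,t^{-2.1}.$$
   Context: Social learning model. A state $\theta\in\{-1,+1\}$ is drawn with $\mathbb{P}(\theta=+1)=\mathbb{P}(\theta=-1)=1/2$. Agents $t=1,2,\dots$ receive private signals $s_t\in\mathbb{R}$ that are i.i.d. conditionally on $\theta$, with CDF $F_+$ if $\theta=+1$ and $F_-$ if $\theta=-1$; $F_+$ and $F_-$ are mutually absolutely continuous. Let $L_t=\log\frac{\mathbb{P}(\theta=+1\mid s_t)}{\mathbb{P}(\theta=-1\mid s_t)}$ be the private log-likelihood ratio, and let $G_+$, $G_-$ denote the CDFs of $L_t$ conditional on $\theta=+1$, $\theta=-1$ respectively. Signals are assumed unbounded: for every $M\in\mathbb{R}$, $\mathbb{P}(L_t>M)>0$ and $\mathbb{P}(L_t<-M)>0$. Agent $t$ observes $a_1,\dots,a_{t-1}$ and her own signal and chooses $a_t\in\{-1,+1\}$ (utility $1$ if $a_t=\theta$, else $0$). The public belief is $\mu_t=\mathbb{P}(\theta=+1\mid a_1,\dots,a_{t-1})$ and $\ell_t=\log\frac{\mu_t}{1-\mu_t}$ (so $\ell_1=0$). In equilibrium $a_t=+1$ iff $\ell_t+L_t>0$, and otherwise $a_t=-1$. Consequently $\ell_{t+1}=\ell_t+D_+(\ell_t)$ if $a_t=+1$ and $\ell_{t+1}=\ell_t+D_-(\ell_t)$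 if $a_t=-1$, where $D_+(x)=\log\frac{1-G_+(-x)}{1-G_-(-x)}$ and $D_-(x)=\log\frac{G_+(-x)}{G_-(-x)}$. We write $\mathbb{P}_+(\cdot)=\mathbb{P}(\cdot\mid\theta=+1)$ and $\mathbb{E}_+$ for the corresponding expectation. *)

(* Defs.v *)
From Stdlib Require Import Reals.
Open Scope R_scope.

Definition is_cdf (G : R -> R) : Prop :=
  (forall x y, x <= y -> G x <= G y) /\
  (forall x eps, 0 < eps -> exists delta, 0 < delta /\
      forall y, x <= y < x + delta -> G y - G x < eps) /\
  (forall eps, 0 < eps -> exists M, forall x, x <= - M -> G x < eps) /\
  (forall eps, 0 < eps -> exists M, forall x, M <= x -> 1 - eps < G x).

(* (Gp, Gm) are the conditional CDFs of a log-likelihood ratio L: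
   the law of L under theta=+1 has density e^l w.r.t. its law under theta=-1,
   i.e. for every interval (a,b]:
     e^a * P_-(a<L<=b) <= P_+(a<L<=b) <= e^b * P_-(a<L<=b). *)
Definition llr_pair (Gp Gm : R -> R) : Prop :=
  is_cdf Gp /\ is_cdf Gm /\
  (forall a b, a < b ->
     exp a * (Gm b - Gm a) <= Gp b - Gp a /\
     Gp b - Gp a <= exp b * (Gm b - Gm a)).

(* Unbounded signals: for every M, P(L > M) > 0 and P(L < -M) > 0,
   where P = (P_+ + P_-)/2 (prior 1/2). *)
Definition unbounded_signals (Gp Gm : R -> R) : Prop :=
  forall M, (Gp M + Gm M) / 2 < 1 /\
            exists y, y < - M /\ 0 < (Gp y + Gm y) / 2.

Definition Dplus (Gp Gm : R -> R) (x : R) : R :=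
  ln ((1 - Gp (- x)) / (1 - Gm (- x))).
Definition Dminus (Gp Gm : R -> R) (x : R) : R :=
  ln (Gp (- x) / Gm (- x)).

(* prob_minus_from Gp Gm n l = P_+(the agent n steps later takes action -1
   | current public log-likelihood ratio is l).
   Agent with public llr l plays +1 with P_+-probability 1 - Gp(-l)
   (event l + L > 0) and -1 with probability Gp(-l) (event L <= -l). *)
Fixpoint prob_minus_from (Gp Gm : R -> R) (n : nat) (l : R) : R :=
  match n with
  | O => Gp (- l)
  | S m => (1 - Gp (- l)) * prob_minus_from Gp Gm m (l + Dplus Gp Gm l)
           + Gp (- l) * prob_minus_from Gp Gm m (l + Dminus Gp Gm l)
  end.

(* P_+(a_t = -1), agents indexed from t = 1, with l_1 = 0. *)
Definition prob_wrong (Gp Gm : R -> R) (t : nat) : R :=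
  prob_minus_from Gp Gm (t - 1) 0.

(* Main.v *)
Require Import Defs.
From Stdlib Require Import Reals Lra Psatz.
Open Scope R_scope.


Lemma exp_le' x y : x <= y -> exp x <= exp y.
Proof. intros [H|H]; [left; apply exp_increasing; auto | subst; lra]. Qed.

Lemma ln_le' x y : 0 < x -> x <= y -> ln x <= ln y.
Proof. intros Hx [H|H]; [left; apply ln_increasing; auto | subst; lra]. Qed.

Lemma ln_upper x : 0 < x -> ln x <= x - 1.
Proof. intros Hx. pose proof (exp_ineq1_le (ln x)). rewrite exp_ln in H; lra. Qed.

Lemma ln_nonpos x : 0 < x -> x <= 1 -> ln x <= 0.
Proof. intros; pose proof (ln_upper x H); lra. Qed.

Definition hyps (Gp Gm : R -> R) (c k x0 : R) : Prop :=
  llr_pair Gp Gm /\ unbounded_signals Gp Gm /\ 0 < c /\ 0 < k /\ 0 < x0 /\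
  (forall x, x0 < x ->
       Gm (- x) = c * Rpower x (- k) /\ Gp x = 1 - c * Rpower x (- k)).

Section Basic.
Context (Gp Gm : R -> R) (c k x0 : R) (H : hyps Gp Gm c k x0).

Lemma monoP x y : x <= y -> Gp x <= Gp y.
Proof. destruct H as [[[h _] _] _]. apply h. Qed.
Lemma monoM x y : x <= y -> Gm x <= Gm y.
Proof. destruct H as [[_ [[h _] _]] _]. apply h. Qed.
Lemma llrL a b : a < b -> exp a * (Gm b - Gm a) <= Gp b - Gp a.
Proof. destruct H as [[_ [_ h]] _]. intros; apply h; auto. Qed.
Lemma llrR a b : a < b -> Gp b - Gp a <= exp b * (Gm b - Gm a).
Proof. destruct H as [[_ [_ h]] _]. intros; apply h; auto. Qed.
Lemma tailM x : x0 < x -> Gm (- x) = c * Rpower x (- k).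
Proof. destruct H as [_ [_ [_ [_ [_ h]]]]]. intros; apply h; auto. Qed.
Lemma tailP x : x0 < x -> Gp x = 1 - c * Rpower x (- k).
Proof. destruct H as [_ [_ [_ [_ [_ h]]]]]. intros; apply h; auto. Qed.
Lemma cpos : 0 < c. Proof. destruct H as [_ [_ [h _]]]; auto. Qed.
Lemma kpos : 0 < k. Proof. destruct H as [_ [_ [_ [h _]]]]; auto. Qed.
Lemma x0pos : 0 < x0. Proof. destruct H as [_ [_ [_ [_ [h _]]]]]; auto. Qed.

Lemma rp_pos z : 0 < Rpower z (-k).
Proof. unfold Rpower; apply exp_pos. Qed.

Lemma rp_strict z : 0 < z -> Rpower (z+1) (-k) < Rpower z (-k).
Proof.
  intros Hz. unfold Rpower. apply exp_increasing.
  pose proof kpos. assert (ln z < ln (z+1)) by (apply ln_increasing; lra). nra.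
Qed.

Lemma Gm_pos x : 0 < Gm x.
Proof.
  set (z := Rmax x0 (-x) + 1).
  assert (x0 < z) by (unfold z; pose proof (Rmax_l x0 (-x)); lra).
  assert (-z <= x) by (unfold z; pose proof (Rmax_r x0 (-x)); lra).
  pose proof (monoM _ _ H1). rewrite tailM in H2 by auto.
  pose proof cpos; pose proof (rp_pos z). nra.
Qed.

Lemma Gp_lt1 x : Gp x < 1.
Proof.
  set (z := Rmax x0 x + 1).
  assert (x0 < z) by (unfold z; pose proof (Rmax_l x0 x); lra).
  assert (x <= z) by (unfold z; pose proof (Rmax_r x0 x); lra).
  pose proof (monoP _ _ H1). rewrite (tailP z) in H2 by auto.
  pose proof cpos; pose proof (rp_pos z). nra.
Qed.

Lemma Gp_nonneg x : 0 <= Gp x.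
Proof.
  destruct (Rle_dec 0 (Gp x)) as [h|h]; auto. exfalso.
  destruct H as [[_ [[_ [_ [hm _]]] _]] [HU _]].
  destruct (hm (- Gp x)) as [M1 HM1]; [lra|].
  destruct (HU (Rmax M1 (-x))) as [_ [y [Hy1 Hy2]]].
  assert (y <= - M1) by (pose proof (Rmax_l M1 (-x)); lra).
  assert (y <= x) by (pose proof (Rmax_r M1 (-x)); lra).
  pose proof (HM1 y H0). pose proof (monoP _ _ H1). lra.
Qed.

Lemma Gm_le1 x : Gm x <= 1.
Proof.
  destruct (Rle_dec (Gm x) 1) as [h|h]; auto. exfalso.
  destruct H as [[[_ [_ [_ hp]]] _] [HU _]].
  destruct (hp (Gm x - 1)) as [M2 HM2]; [lra|].
  destruct (HU (Rmax M2 x)) as [HU1 _].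
  pose proof (HM2 (Rmax M2 x) (Rmax_l _ _)).
  pose proof (monoM _ _ (Rmax_r M2 x)). lra.
Qed.

Lemma Gp_le b : Gp b <= exp b * Gm b.
Proof.
  apply Rnot_lt_le; intro h.
  destruct H as [[[_ [_ [hp _]]] _] _].
  destruct (hp (Gp b - exp b * Gm b)) as [M HM]; [lra|].
  set (a := Rmin (b - 1) (- M)).
  assert (a < b) by (unfold a; pose proof (Rmin_l (b-1) (-M)); lra).
  pose proof (llrR _ _ H0). pose proof (HM a (Rmin_r _ _)).
  pose proof (Gm_pos a). pose proof (exp_pos b). nra.
Qed.

Lemma Gm_ge y : 1 - Gm y <= exp (- y) * (1 - Gp y).
Proof.
  apply Rnot_lt_le; intro h.
  destruct H as [[_ [[_ [_ [_ hm]]] _]] _].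
  destruct (hm (1 - Gm y - exp (- y) * (1 - Gp y))) as [M HM]; [lra|].
  set (b := Rmax (y + 1) M).
  assert (y < b) by (unfold b; pose proof (Rmax_l (y+1) M); lra).
  pose proof (llrL _ _ H0). pose proof (HM b (Rmax_r _ _)).
  pose proof (Gp_lt1 b).
  assert (E : exp (-y) * exp y = 1) by (rewrite <- exp_plus; replace (-y+y) with 0 by ring; apply exp_0).
  pose proof (exp_pos y). pose proof (exp_pos (-y)).
  assert (exp y * (exp (-y) * (1 - Gp y)) < exp y * (Gm b - Gm y)) by (apply Rmult_lt_compat_l; lra).
  assert (exp y * (exp (-y) * (1 - Gp y)) = 1 - Gp y) by (rewrite <- Rmult_assoc; rewrite (Rmult_comm (exp y)); rewrite E; ring).
  lra.
Qed.

Lemma Gp_pos x : 0 < Gp x.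
Proof.
  set (z := Rmax x0 (-x) + 1).
  assert (x0 < z) by (unfold z; pose proof (Rmax_l x0 (-x)); lra).
  assert (-z <= x) by (unfold z; pose proof (Rmax_r x0 (-x)); lra).
  pose proof (monoP _ _ H1).
  assert (- (z+1) < - z) by lra.
  pose proof (llrL _ _ H3).
  rewrite tailM in H4 by auto. rewrite tailM in H4 by lra.
  pose proof (rp_strict z ltac:(pose proof x0pos; lra)).
  pose proof cpos. pose proof (Gp_nonneg (- (z+1))). pose proof (exp_pos (- (z+1))).
  assert (0 < exp (- (z + 1)) * (c * Rpower z (- k) - c * Rpower (z + 1) (- k))).
  { apply Rmult_lt_0_compat; auto. nra. }
  lra.
Qed.

Lemma Gm_lt1 x : Gm x < 1.
Proof.
  set (z := Rmax x0 x + 1).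
  assert (x0 < z) by (unfold z; pose proof (Rmax_l x0 x); lra).
  assert (x <= z) by (unfold z; pose proof (Rmax_r x0 x); lra).
  pose proof (monoM _ _ H1).
  assert (z < z + 1) by lra.
  pose proof (llrR _ _ H3).
  rewrite (tailP z) in H4 by auto. rewrite (tailP (z+1)) in H4 by lra.
  pose proof (rp_strict z ltac:(pose proof x0pos; lra)).
  pose proof cpos. pose proof (Gm_le1 (z+1)). pose proof (exp_pos (z+1)).
  assert (0 < (1 - c * Rpower (z + 1) (- k) - (1 - c * Rpower z (- k)))) by nra.
  assert (0 < Gm (z+1) - Gm z) by nra.
  lra.
Qed.

Lemma gap_pos l : 0 <= l -> (1 - exp (-1)) * Gm (- l - 1) <= Gm (- l) - Gp (- l).
Proof.
  intros Hl.
  assert (- l - 1 < - l) by lra.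
  pose proof (llrR _ _ H0).
  pose proof (Gp_le (- l - 1)).
  pose proof (monoM _ _ (Rlt_le _ _ H0)).
  assert (exp (- l) <= 1) by (rewrite <- exp_0; apply exp_le'; lra).
  assert (exp (- l - 1) <= exp (-1)) by (apply exp_le'; lra).
  pose proof (Gm_pos (- l - 1)). pose proof (exp_pos (-l)).
  nra.
Qed.

Lemma gap_neg l : l <= 0 -> (1 - exp (-1)) * (1 - Gp (- l + 1)) <= Gm (- l) - Gp (- l).
Proof.
  intros Hl. set (y := - l).
  assert (y < y + 1) by lra.
  pose proof (llrL _ _ H0).
  pose proof (Gm_ge (y+1)).
  pose proof (monoP _ _ (Rlt_le _ _ H0)).
  assert (exp y * exp (-y) = 1) by (rewrite <- exp_plus; replace (y + -y) with 0 by ring; apply exp_0).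
  assert (exp (- (y+1)) <= exp (-1)) by (apply exp_le'; unfold y; lra).
  assert (1 <= exp y) by (rewrite <- exp_0; apply exp_le'; unfold y; lra).
  pose proof (Gp_lt1 (y+1)). pose proof (exp_pos (-y)). pose proof (exp_pos y).
  replace (- l + 1) with (y + 1) by (unfold y; ring).
  assert (Gm (y+1) - Gm y <= Gp (y+1) - Gp y).
  { assert (exp (-y) * (exp y * (Gm (y + 1) - Gm y)) <= exp (-y) * (Gp (y + 1) - Gp y))
      by (apply Rmult_le_compat_l; lra).
    assert (exp (-y) * (Gp (y + 1) - Gp y) <= Gp (y + 1) - Gp y).
    { assert (exp (-y) <= 1) by (rewrite <- exp_0; apply exp_le'; unfold y; lra). nra. }
    nra. }
  pose proof (Gm_le1 (y+1)).
  nra.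
Qed.

End Basic.


Lemma exp_quarter x : x <= 0 -> exp (x/4) <= 1 - (1 - exp x)/4.
Proof.
  intros Hx. set (w := exp (x/4)).
  assert (exp x = w*w*w*w).
  { unfold w. rewrite <- !exp_plus. f_equal. field. }
  assert (0 < w) by apply exp_pos.
  assert (w <= 1) by (unfold w; rewrite <- exp_0; apply exp_le'; lra).
  rewrite H. assert (0 <= (w-1)*(w-1)*(w*w+2*w+3)) by (apply Rmult_le_pos; nra). nra.
Qed.

Lemma exp_small x : 0 <= x <= 1/2 -> exp x <= 1 + 2*x.
Proof.
  intros Hx. pose proof (exp_ineq1_le (-x)). rewrite exp_Ropp in H.
  pose proof (exp_pos x).
  assert (1 - x <= / exp x) by lra.
  assert ((1-x) * exp x <= 1).
  { replace 1 with (/ exp x * exp x) at 2 by (field; lra). apply Rmult_le_compat_r; lra. }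
  nra.
Qed.

Lemma exp_12 : 8 <= exp 3.
Proof.
  pose proof (exp_ineq1_le 1).
  assert (exp 3 = exp 1 * exp 1 * exp 1) by (rewrite <- !exp_plus; f_equal; ring).
  rewrite H0. nra.
Qed.

Section Drift.
Context (Gp Gm : R -> R) (c k x0 : R) (H : hyps Gp Gm c k x0).

Definition pp l := Gp (- l).
Definition mm l := Gm (- l).
Definition T1 mu l :=
  exp (/2 * ln (1 - pp l) + /2 * ln (1 - mm l) + mu * (ln (1 - pp l) - ln (1 - mm l))).
Definition T2 mu l :=
  exp (/2 * ln (pp l) + /2 * ln (mm l) + mu * (ln (mm l) - ln (pp l))).

Lemma pm_facts l : 0 < pp l < 1 /\ 0 < mm l < 1 /\ pp l <= mm l.
Proof.
  unfold pp, mm. repeat split.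
  - apply (Gp_pos _ _ c k x0 H).
  - apply (Gp_lt1 _ _ c k x0 H).
  - apply (Gm_pos _ _ c k x0 H).
  - apply (Gm_lt1 _ _ c k x0 H).
  - destruct (Rle_dec 0 l).
    + pose proof (gap_pos _ _ c k x0 H l r). pose proof (Gm_pos _ _ c k x0 H (-l-1)).
      assert (exp (-1) < 1) by (rewrite <- exp_0; apply exp_increasing; lra). nra.
    + pose proof (gap_neg _ _ c k x0 H l ltac:(lra)). pose proof (Gp_lt1 _ _ c k x0 H (-l+1)).
      assert (exp (-1) < 1) by (rewrite <- exp_0; apply exp_increasing; lra). nra.
Qed.

Lemma drift_good mu l : 0 <= mu <= /4 -> x0 < l -> 12 <= l ->
  T1 mu l + T2 mu l <= 1 - mm l / 8.
Proof.
  intros Hmu Hl1 Hl2. destruct (pm_facts l) as [[hp1 hp2] [[hm1 hm2] hpm]].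
  set (a := ln (1 - pp l)). set (b := ln (1 - mm l)).
  set (c' := ln (pp l)). set (e := ln (mm l)).
  assert (ha : a <= 0) by (apply ln_nonpos; lra).
  assert (hb : b <= 0) by (apply ln_nonpos; lra).
  assert (he : e <= 0) by (apply ln_nonpos; lra).
  assert (hce : c' - e <= - l).
  { pose proof (Gp_le _ _ c k x0 H (- l)). fold (pp l) (mm l) in H0.
    unfold c', e. rewrite <- (ln_exp (-l)). 
    assert (ln (pp l) <= ln (exp (-l) * mm l)) by (apply ln_le'; lra).
    rewrite ln_mult in H1 by (auto; apply exp_pos). lra. }
  assert (T1 mu l <= exp (b/4)).
  { unfold T1. fold a b. apply exp_le'. nra. }
  pose proof (exp_quarter b hb). unfold b in H1 at 2. rewrite exp_ln in H1 by lra.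
  assert (T2 mu l <= mm l * exp (- l / 4)).
  { unfold T2. fold c' e. rewrite <- (exp_ln (mm l)) by lra. rewrite <- exp_plus.
    apply exp_le'. fold e. nra. }
  assert (exp (- l / 4) <= / 8).
  { assert (exp (- l / 4) <= exp (-3)) by (apply exp_le'; lra).
    pose proof exp_12.
    assert (E3 : exp (-3) * exp 3 = 1) by (rewrite <- exp_plus; replace (-3+3) with 0 by ring; apply exp_0).
    pose proof (exp_pos (-3)). nra. }
  nra.
Qed.

Lemma drift_bad mu l : 0 <= mu <= /4 -> x0 < - l -> 12 <= - l ->
  T1 mu l + T2 mu l <= 1 - (1 - pp l) / 8.
Proof.
  intros Hmu Hl1 Hl2. destruct (pm_facts l) as [[hp1 hp2] [[hm1 hm2] hpm]].
  set (a := ln (1 - pp l)). set (b := ln (1 - mm l)).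
  set (c' := ln (pp l)). set (e := ln (mm l)).
  assert (ha : a <= 0) by (apply ln_nonpos; lra).
  assert (hc : c' <= 0) by (apply ln_nonpos; lra).
  assert (he : e <= 0) by (apply ln_nonpos; lra).
  assert (hab : b - a <= l).
  { pose proof (Gm_ge _ _ c k x0 H (- l)). fold (pp l) (mm l) in H0.
    replace (- - l) with l in H0 by ring.
    unfold a, b. 
    assert (ln (1 - mm l) <= ln (exp l * (1 - pp l))) by (apply ln_le'; lra).
    rewrite ln_mult in H1 by (try apply exp_pos; lra). rewrite ln_exp in H1. lra. }
  assert (T2 mu l <= exp (c'/4)).
  { unfold T2. fold c' e. apply exp_le'. nra. }
  pose proof (exp_quarter c' hc). unfold c' in H1 at 2. rewrite exp_ln in H1 by lra.
  assert (T1 mu l <= (1 - pp l) * exp (l / 4)).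
  { unfold T1. fold a b. rewrite <- (exp_ln (1 - pp l)) by lra. rewrite <- exp_plus.
    apply exp_le'. fold a. nra. }
  assert (exp (l / 4) <= / 8).
  { assert (exp (l / 4) <= exp (-3)) by (apply exp_le'; lra).
    pose proof exp_12.
    assert (E3 : exp (-3) * exp 3 = 1) by (rewrite <- exp_plus; replace (-3+3) with 0 by ring; apply exp_0).
    pose proof (exp_pos (-3)). nra. }
  nra.
Qed.

Lemma hellinger l : exp (/2 * ln (1 - pp l) + /2 * ln (1 - mm l)) + exp (/2 * ln (pp l) + /2 * ln (mm l))
   <= 1 - (mm l - pp l)^2 / 8.
Proof.
  destruct (pm_facts l) as [[hp1 hp2] [[hm1 hm2] hpm]].
  rewrite !exp_plus.
  set (u := exp (/2 * ln (1 - pp l))). set (v := exp (/2 * ln (1 - mm l))).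
  set (s := exp (/2 * ln (pp l))). set (w := exp (/2 * ln (mm l))).
  assert (Hu : u * u = 1 - pp l) by (unfold u; rewrite <- exp_plus; replace (/ 2 * ln (1 - pp l) + / 2 * ln (1 - pp l)) with (ln (1 - pp l)) by field; apply exp_ln; lra).
  assert (Hv : v * v = 1 - mm l) by (unfold v; rewrite <- exp_plus; replace (/ 2 * ln (1 - mm l) + / 2 * ln (1 - mm l)) with (ln (1 - mm l)) by field; apply exp_ln; lra).
  assert (Hs : s * s = pp l) by (unfold s; rewrite <- exp_plus; replace (/ 2 * ln (pp l) + / 2 * ln (pp l)) with (ln (pp l)) by field; apply exp_ln; lra).
  assert (Hw : w * w = mm l) by (unfold w; rewrite <- exp_plus; replace (/ 2 * ln (mm l) + / 2 * ln (mm l)) with (ln (mm l)) by field; apply exp_ln; lra).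
  assert (0 < u) by apply exp_pos. assert (0 < v) by apply exp_pos.
  assert (0 < s) by apply exp_pos. assert (0 < w) by apply exp_pos.
  assert (s <= 1) by nra. assert (w <= 1) by nra.
  rewrite <- Hs, <- Hw.
  assert ((w*w - s*s)^2 <= 4 * (w - s)^2).
  { replace ((w*w - s*s)^2) with ((w-s)^2 * (w+s)^2) by ring.
    assert ((w+s)^2 <= 4) by nra. assert (0 <= (w-s)^2) by nra. nra. }
  assert (2 - 2 * (u*v + s*w) = (u - v)^2 + (s - w)^2) by nra.
  nra.
Qed.

End Drift.


Lemma klnl_bound k nu l : 0 < k -> 0 < nu -> 0 < l -> k * ln l <= nu * l + k * ln (k / nu).
Proof.
  intros hk hn hl.
  assert (l = (nu * l / k) * (k / nu)) by (field; lra).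
  assert (0 < nu * l / k) by (apply Rdiv_lt_0_compat; nra).
  assert (0 < k / nu) by (apply Rdiv_lt_0_compat; lra).
  assert (ln l = ln (nu * l / k) + ln (k / nu)) by (rewrite H at 1; apply ln_mult; auto).
  pose proof (ln_upper _ H0).
  assert (k * ln (nu * l / k) <= k * (nu * l / k - 1)) by (apply Rmult_le_compat_l; lra).
  assert (k * (nu * l / k - 1) = nu * l - k) by (field; lra).
  rewrite H2. nra.
Qed.

Section Mid.
Context (Gp Gm : R -> R) (c k x0 : R) (H : hyps Gp Gm c k x0).

Definition L0 := x0 + 12.
Definition g0 := (1 - exp (-1)) * (c * Rpower (L0 + 1) (- k)).
Definition B1 := - ln (1 - Gm L0).
Definition B2 := - ln (Gp (- L0)).
Definition BB := B1 + B2.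

Lemma BB_nonneg : 0 <= B1 /\ 0 <= B2.
Proof.
  split.
  - unfold B1. pose proof (Gm_pos _ _ c k x0 H L0). pose proof (Gm_lt1 _ _ c k x0 H L0).
    pose proof (ln_nonpos (1 - Gm L0) ltac:(lra) ltac:(lra)). lra.
  - unfold B2. pose proof (Gp_pos _ _ c k x0 H (- L0)). pose proof (Gp_lt1 _ _ c k x0 H (- L0)).
    pose proof (ln_nonpos (Gp (- L0)) ltac:(lra) ltac:(lra)). lra.
Qed.

Lemma x0p : 0 < x0. Proof. apply (x0pos _ _ c k x0 H). Qed.

Lemma g0_le l : - L0 <= l <= L0 -> g0 <= mm Gm l - pp Gp l.
Proof.
  intros [h1 h2]. pose proof x0p. unfold mm, pp, g0.
  assert (E1 : Gm (- (L0 + 1)) = c * Rpower (L0 + 1) (- k)) by (apply (tailM _ _ c k x0 H); unfold L0; lra).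
  assert (E2 : Gp (L0 + 1) = 1 - c * Rpower (L0 + 1) (- k)) by (apply (tailP _ _ c k x0 H); unfold L0; lra).
  assert (exp (-1) < 1) by (rewrite <- exp_0; apply exp_increasing; lra).
  destruct (Rle_dec 0 l).
  - pose proof (gap_pos _ _ c k x0 H l r).
    pose proof (monoM _ _ c k x0 H (- (L0+1)) (- l - 1) ltac:(lra)). nra.
  - pose proof (gap_neg _ _ c k x0 H l ltac:(lra)).
    pose proof (monoP _ _ c k x0 H (- l + 1) (L0+1) ltac:(lra)). nra.
Qed.

Lemma g0_pos : 0 < g0.
Proof.
  unfold g0. apply Rmult_lt_0_compat.
  - assert (exp (-1) < 1) by (rewrite <- exp_0; apply exp_increasing; lra). lra.
  - apply Rmult_lt_0_compat; [apply (cpos _ _ c k x0 H)|apply (rp_pos k)].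
Qed.

Lemma g0_le1 : g0 <= 1.
Proof.
  pose proof (g0_le 0 ltac:(pose proof x0p; unfold L0; lra)).
  destruct (pm_facts _ _ c k x0 H 0) as [[? ?] [[? ?] ?]]. lra.
Qed.

Lemma drift_mid mu l : 0 <= mu -> mu * BB <= g0^2 / 32 -> mu * BB <= /2 ->
  - L0 <= l <= L0 -> T1 Gp Gm mu l + T2 Gp Gm mu l <= 1 - g0^2 / 16.
Proof.
  intros hmu hB1 hB2 hl. destruct (pm_facts _ _ c k x0 H l) as [[hp1 hp2] [[hm1 hm2] hpm]].
  destruct BB_nonneg as [b1 b2]. pose proof x0p.
  assert (ha : ln (1 - pp Gp l) <= 0) by (apply ln_nonpos; lra).
  assert (he : ln (mm Gm l) <= 0) by (apply ln_nonpos; lra).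
  assert (hb : - ln (1 - mm Gm l) <= B1).
  { unfold B1, mm. apply Ropp_le_contravar. apply ln_le'.
    - pose proof (Gm_lt1 _ _ c k x0 H L0); lra.
    - pose proof (monoM _ _ c k x0 H (- l) L0 ltac:(lra)); lra. }
  assert (hc : - ln (pp Gp l) <= B2).
  { unfold B2, pp. apply Ropp_le_contravar. apply ln_le'.
    - apply (Gp_pos _ _ c k x0 H).
    - apply (monoP _ _ c k x0 H); lra. }
  assert (T1 Gp Gm mu l <= exp (/2 * ln (1 - pp Gp l) + /2 * ln (1 - mm Gm l)) * exp (mu * BB)).
  { unfold T1. rewrite <- exp_plus. apply exp_le'. unfold BB. nra. }
  assert (T2 Gp Gm mu l <= exp (/2 * ln (pp Gp l) + /2 * ln (mm Gm l)) * exp (mu * BB)).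
  { unfold T2. rewrite <- exp_plus. apply exp_le'. unfold BB. nra. }
  pose proof (hellinger _ _ c k x0 H l).
  pose proof (exp_small (mu * BB) ltac:(split; [unfold BB; nra| lra])).
  pose proof (g0_le l hl). pose proof g0_pos. pose proof g0_le1.
  assert (g0^2 <= (mm Gm l - pp Gp l)^2) by nra.
  pose proof (exp_pos (/2 * ln (1 - pp Gp l) + /2 * ln (1 - mm Gm l))).
  pose proof (exp_pos (/2 * ln (pp Gp l) + /2 * ln (mm Gm l))).
  pose proof (exp_pos (mu * BB)).
  set (S := exp (/2 * ln (1 - pp Gp l) + /2 * ln (1 - mm Gm l)) + exp (/2 * ln (pp Gp l) + /2 * ln (mm Gm l))) in *.
  assert (T1 Gp Gm mu l + T2 Gp Gm mu l <= S * exp (mu * BB)) by (unfold S; lra).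
  assert (S * exp (mu * BB) <= (1 - g0^2/8) * (1 + 2 * (mu * BB))).
  { apply Rmult_le_compat; try lra. unfold S; lra. }
  assert (0 <= g0^2/8 * (2 * (mu * BB))) by (apply Rmult_le_pos; [nra| unfold BB; nra]).
  assert ((1 - g0^2/8) * (1 + 2 * (mu * BB)) = 1 - g0^2/8 + 2 * (mu * BB) - g0^2/8 * (2 * (mu * BB))) by ring.
  lra.
Qed.

End Mid.


Lemma weight_bound k c nu A l : 0 < k -> 0 < c -> 0 < nu -> 0 < l ->
  24 * exp (k * ln (k / nu)) / c <= A ->
  24 <= A * (c * exp (- k * ln l)) * exp (nu * l).
Proof.
  intros hk hc hn hl hA.
  pose proof (klnl_bound k nu l hk hn hl).
  set (K := k * ln (k / nu)) in *.
  assert (A * (c * exp (- k * ln l)) * exp (nu * l) = A * c * exp (nu * l - k * ln l)).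
  { replace (nu * l - k * ln l) with (- k * ln l + nu * l) by ring. rewrite exp_plus. ring. }
  rewrite H0.
  assert (exp (- K) <= exp (nu * l - k * ln l)) by (apply exp_le'; lra).
  assert (EK : exp K * exp (- K) = 1) by (rewrite <- exp_plus; replace (K + - K) with 0 by ring; apply exp_0).
  assert (24 * exp K <= A * c).
  { assert (24 * exp K / c * c <= A * c) by (apply Rmult_le_compat_r; lra).
    replace (24 * exp K / c * c) with (24 * exp K) in H2 by (field; lra). lra. }
  pose proof (exp_pos K). pose proof (exp_pos (- K)).
  assert (24 * exp K * exp (-K) <= A * c * exp (nu * l - k * ln l)) by (apply Rmult_le_compat; nra).
  nra.
Qed.

Section Full.
Context (Gp Gm : R -> R) (c k x0 : R) (H : hyps Gp Gm c k x0).

Definition mu0 := g0 c k x0 ^ 2 / (128 * (BB Gp Gm x0 + 1)).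
Definition nu0 := mu0 / 3.
Definition A0 := 24 * exp (k * ln (k / nu0)) / c + 48 / (g0 c k x0 ^ 2) + 1.

Lemma consts : 0 < mu0 /\ mu0 <= /4 /\ mu0 * BB Gp Gm x0 <= g0 c k x0 ^2 / 32 /\
   mu0 * BB Gp Gm x0 <= /2 /\ 0 < nu0 /\ 24 * exp (k * ln (k / nu0)) / c <= A0 /\
   48 / (g0 c k x0 ^ 2) <= A0 /\ 1 <= A0.
Proof.
  pose proof (g0_pos _ _ c k x0 H). pose proof (g0_le1 _ _ c k x0 H).
  destruct (BB_nonneg _ _ c k x0 H) as [b1 b2].
  pose proof (cpos _ _ c k x0 H).
  set (g := g0 c k x0) in *. set (B := BB Gp Gm x0) in *.
  assert (hB : 0 <= B) by (unfold B, BB; lra).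
  assert (0 < g^2) by nra.
  assert (g^2 <= 1) by nra.
  assert (hmu : 0 < mu0) by (unfold mu0; fold g B; apply Rdiv_lt_0_compat; lra).
  assert (mu0 * (128 * (B + 1)) = g^2) by (unfold mu0; fold g B; field; lra).
  assert (0 < 24 * exp (k * ln (k / nu0)) / c) by (apply Rdiv_lt_0_compat; [pose proof (exp_pos (k * ln (k / nu0))); lra| lra]).
  assert (0 < 48 / g^2) by (apply Rdiv_lt_0_compat; lra).
  unfold A0. fold g.
  repeat split; try nra.
  unfold nu0; lra.
Qed.

Lemma drift_full l : T1 Gp Gm mu0 l + T2 Gp Gm mu0 l <= 1 - 3 / (A0 * exp (nu0 * Rabs l)).
Proof.
  destruct consts as [h1 [h2 [h3 [h4 [h5 [h6 [h7 h8]]]]]]].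
  pose proof (x0p _ _ c k x0 H). pose proof (cpos _ _ c k x0 H). pose proof (kpos _ _ c k x0 H).
  pose proof (exp_pos (nu0 * Rabs l)).
  assert (hW : 0 < A0 * exp (nu0 * Rabs l)) by nra.
  destruct (Rle_dec (L0 x0) l) as [hg|hg].
  - unfold L0 in hg.
    pose proof (drift_good _ _ c k x0 H mu0 l ltac:(lra) ltac:(lra) ltac:(lra)).
    assert (E : mm Gm l = c * exp (- k * ln l)) by (unfold mm; rewrite (tailM _ _ c k x0 H) by lra; reflexivity).
    rewrite Rabs_right in hW |- * by lra.
    pose proof (weight_bound k c nu0 A0 l ltac:(lra) ltac:(lra) h5 ltac:(lra) h6) as WB.
    rewrite <- E in WB.
    assert (3 / (A0 * exp (nu0 * l)) <= mm Gm l / 8).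
    { apply (Rmult_le_reg_r (A0 * exp (nu0 * l))); auto. field_simplify; nra. }
    lra.
  - destruct (Rle_dec l (- L0 x0)) as [hb|hb].
    + unfold L0 in hb.
      pose proof (drift_bad _ _ c k x0 H mu0 l ltac:(lra) ltac:(lra) ltac:(lra)).
      assert (E : 1 - pp Gp l = c * exp (- k * ln (- l))).
      { unfold pp. rewrite (tailP _ _ c k x0 H) by lra. unfold Rpower. ring. }
      rewrite Rabs_left in hW |- * by lra.
      pose proof (weight_bound k c nu0 A0 (- l) ltac:(lra) ltac:(lra) h5 ltac:(lra) h6) as WB.
      rewrite <- E in WB.
      assert (3 / (A0 * exp (nu0 * - l)) <= (1 - pp Gp l) / 8).
      { apply (Rmult_le_reg_r (A0 * exp (nu0 * - l))); auto. field_simplify; nra. }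
      lra.
    + pose proof (drift_mid _ _ c k x0 H mu0 l ltac:(lra) h3 h4 ltac:(lra)).
      assert (1 <= exp (nu0 * Rabs l)) by (rewrite <- exp_0; apply exp_le'; pose proof (Rabs_pos l); nra).
      pose proof (g0_pos _ _ c k x0 H).
      assert (3 / (A0 * exp (nu0 * Rabs l)) <= g0 c k x0 ^ 2 / 16).
      { apply (Rmult_le_reg_r (A0 * exp (nu0 * Rabs l))); auto.
        assert (48 <= A0 * g0 c k x0 ^ 2).
        { assert (HH : 48 / g0 c k x0 ^ 2 * g0 c k x0 ^ 2 <= A0 * g0 c k x0 ^ 2)
            by (apply Rmult_le_compat_r; nra).
          replace (48 / g0 c k x0 ^ 2 * g0 c k x0 ^ 2) with 48 in HH by (field; intro; nra). lra. }
        field_simplify; nra. }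
      lra.
Qed.

End Full.


Lemma ln_div' x y : 0 < x -> 0 < y -> ln (x / y) = ln x - ln y.
Proof. intros. unfold Rdiv. rewrite ln_mult, ln_Rinv; try lra. apply Rinv_0_lt_compat; auto. Qed.

Lemma Rdiv_le_0_compat a b : 0 <= a -> 0 < b -> 0 <= a / b.
Proof. intros. unfold Rdiv. apply Rmult_le_pos; auto. left; apply Rinv_0_lt_compat; auto. Qed.

Lemma cube_step N X Z : 1 <= N -> 0 < X < N + 1 -> 0 <= Z ->
  Z / N^3 * (1 - 3 / X) <= Z / (N+1)^3.
Proof.
  intros hN hX hZ.
  assert (1 - 3 / X <= 1 - 3 / (N+1)).
  { assert (3 / (N+1) <= 3 / X).
    { unfold Rdiv. apply Rmult_le_compat_l; [lra|]. apply Rinv_le_contravar; lra. }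
    lra. }
  assert (1 - 3 / (N+1) <= N^3 / (N+1)^3).
  { apply (Rmult_le_reg_r ((N+1)^3)); [nra|].
    field_simplify; [|lra|lra]. nra. }
  assert (0 <= Z / N^3) by (apply Rdiv_le_0_compat; nra).
  assert (Z / N^3 * (1 - 3/X) <= Z / N^3 * (N^3 / (N+1)^3)) by (apply Rmult_le_compat_l; lra).
  replace (Z / N ^ 3 * (N ^ 3 / (N + 1) ^ 3)) with (Z / (N+1)^3) in H2 by (field; lra).
  lra.
Qed.

Lemma exp_cube x : exp x ^ 3 = exp (3 * x).
Proof. replace (3 * x) with (x + x + x) by ring. rewrite !exp_plus. ring. Qed.

Section Main.
Context (Gp Gm : R -> R) (c k x0 : R) (H : hyps Gp Gm c k x0).

Definition VV (n : nat) (l : R) := Rmin 1 ((A0 Gp Gm c k x0 * exp (nu0 Gp Gm c k x0 * Rabs l) / INR (S n))^3).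

Lemma VV_le1 n l : VV n l <= 1.
Proof. apply Rmin_l. Qed.
Lemma VV_le n l : VV n l <= (A0 Gp Gm c k x0 * exp (nu0 Gp Gm c k x0 * Rabs l) / INR (S n))^3.
Proof. apply Rmin_r. Qed.

Lemma bound_all n l : prob_minus_from Gp Gm n l <= exp (- l / 2) * VV n l.
Proof.
  destruct (consts _ _ c k x0 H) as [h1 [h2 [h3 [h4 [h5 [h6 [h7 h8]]]]]]].
  set (A := A0 Gp Gm c k x0) in *. set (nu := nu0 Gp Gm c k x0) in *. set (mu := mu0 Gp Gm c k x0) in *.
  assert (hmunu : mu = 3 * nu) by (unfold nu, mu, nu0; field).
  revert l. induction n as [|n IH]; intro l.
  - simpl. unfold VV. fold A nu.
    assert (1 <= exp (nu * Rabs l)) by (rewrite <- exp_0; apply exp_le'; pose proof (Rabs_pos l); nra).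
    assert (1 <= (A * exp (nu * Rabs l) / INR 1) ^ 3).
    { simpl INR. replace (A * exp (nu * Rabs l) / 1) with (A * exp (nu * Rabs l)) by field.
      assert (1 <= A * exp (nu * Rabs l)) by nra.
      assert (1 * 1 * 1 <= (A * exp (nu * Rabs l)) * (A * exp (nu * Rabs l)) * (A * exp (nu * Rabs l)))
        by (apply Rmult_le_compat; try nra; apply Rmult_le_compat; nra).
      simpl. lra. }
    rewrite Rmin_left by lra. rewrite Rmult_1_r.
    destruct (Rle_dec 0 l).
    + pose proof (Gp_le _ _ c k x0 H (- l)). pose proof (Gm_le1 _ _ c k x0 H (- l)).
      pose proof (Gm_pos _ _ c k x0 H (- l)).
      assert (exp (- l) <= exp (- l / 2)) by (apply exp_le'; lra).
      pose proof (exp_pos (- l)). nra.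
    + pose proof (Gp_lt1 _ _ c k x0 H (- l)).
      assert (1 <= exp (- l / 2)) by (rewrite <- exp_0; apply exp_le'; lra). lra.
  - destruct (pm_facts _ _ c k x0 H l) as [[hp1 hp2] [[hm1 hm2] hpm]].
    change (prob_minus_from Gp Gm (S n) l) with
      ((1 - Gp (- l)) * prob_minus_from Gp Gm n (l + Defs.Dplus Gp Gm l)
       + Gp (- l) * prob_minus_from Gp Gm n (l + Defs.Dminus Gp Gm l)).
    fold (pp Gp l).
    set (a := ln (1 - pp Gp l)). set (b := ln (1 - mm Gm l)).
    set (c' := ln (pp Gp l)). set (e := ln (mm Gm l)).
    assert (ED1 : Defs.Dplus Gp Gm l = a - b).
    { unfold Defs.Dplus. fold (pp Gp l); fold (mm Gm l). apply ln_div'; lra. }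
    assert (ED2 : Defs.Dminus Gp Gm l = c' - e).
    { unfold Defs.Dminus. fold (pp Gp l); fold (mm Gm l). apply ln_div'; lra. }
    rewrite ED1, ED2.
    assert (hab : b <= a) by (apply ln_le'; lra).
    assert (hce : c' <= e) by (apply ln_le'; lra).
    set (lp := l + (a - b)). set (lm := l + (c' - e)).
    set (pi1 := exp (/2 * a + /2 * b)). set (pi2 := exp (/2 * c' + /2 * e)).
    assert (E1 : (1 - pp Gp l) * exp (- lp / 2) = exp (- l / 2) * pi1).
    { unfold pi1, lp. rewrite <- (exp_ln (1 - pp Gp l)) at 1 by lra. fold a.
      rewrite <- !exp_plus. f_equal. field. }
    assert (E2 : pp Gp l * exp (- lm / 2) = exp (- l / 2) * pi2).
    { unfold pi2, lm. rewrite <- (exp_ln (pp Gp l)) at 1 by lra. fold c'.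
      rewrite <- !exp_plus. f_equal. field. }
    pose proof (IH lp) as IHp. pose proof (IH lm) as IHm.
    assert (Hstep : (1 - pp Gp l) * prob_minus_from Gp Gm n lp + pp Gp l * prob_minus_from Gp Gm n lm
              <= exp (- l / 2) * (pi1 * VV n lp + pi2 * VV n lm)).
    { assert ((1 - pp Gp l) * prob_minus_from Gp Gm n lp <= (1 - pp Gp l) * (exp (- lp / 2) * VV n lp))
        by (apply Rmult_le_compat_l; lra).
      assert (pp Gp l * prob_minus_from Gp Gm n lm <= pp Gp l * (exp (- lm / 2) * VV n lm))
        by (apply Rmult_le_compat_l; lra).
      replace (exp (- l / 2) * (pi1 * VV n lp + pi2 * VV n lm)) with
        ((1 - pp Gp l) * exp (- lp / 2) * VV n lp + pp Gp l * exp (- lm / 2) * VV n lm)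
        by (rewrite E1, E2; ring).
      lra. }
    eapply Rle_trans; [exact Hstep|].
    apply Rmult_le_compat_l; [left; apply exp_pos|].
    pose proof (drift_full _ _ c k x0 H l) as DF. fold mu A nu in DF.
    unfold T1, T2 in DF. fold a b c' e in DF.
    assert (hpi1 : 0 < pi1) by apply exp_pos. assert (hpi2 : 0 < pi2) by apply exp_pos.
    assert (P1le : pi1 <= exp (/ 2 * a + / 2 * b + mu * (a - b))) by (apply exp_le'; nra).
    assert (P2le : pi2 <= exp (/ 2 * c' + / 2 * e + mu * (e - c'))) by (apply exp_le'; nra).
    pose proof (exp_pos (nu * Rabs l)).
    assert (hW : 0 < A * exp (nu * Rabs l)) by nra.
    assert (0 < 3 / (A * exp (nu * Rabs l))) by (apply Rdiv_lt_0_compat; lra).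
    unfold VV at 3. fold A nu.
    destruct (Rle_dec 1 ((A * exp (nu * Rabs l) / INR (S (S n))) ^ 3)) as [hc|hc].
    + rewrite Rmin_left by lra.
      pose proof (VV_le1 n lp) as V1. pose proof (VV_le1 n lm) as V2.
      assert (pi1 * VV n lp <= pi1) by (pose proof (Rmult_le_compat_l pi1 _ _ (Rlt_le _ _ hpi1) V1); lra).
      assert (pi2 * VV n lm <= pi2) by (pose proof (Rmult_le_compat_l pi2 _ _ (Rlt_le _ _ hpi2) V2); lra).
      lra.
    + rewrite Rmin_right by lra.
      set (N := INR (S n)).
      assert (hN : INR (S (S n)) = N + 1) by (unfold N; rewrite S_INR; ring).
      rewrite hN in hc |- *.
      assert (hN1 : 1 <= N) by (unfold N; rewrite S_INR; pose proof (pos_INR n); lra).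
      assert (hXN : A * exp (nu * Rabs l) < N + 1).
      { apply Rnot_le_lt; intro hh. apply hc.
        assert (1 <= A * exp (nu * Rabs l) / (N + 1)).
        { apply (Rmult_le_reg_r (N+1)); [lra|]. field_simplify; lra. }
        assert (1 * 1 * 1 <= (A * exp (nu * Rabs l) / (N + 1)) * (A * exp (nu * Rabs l) / (N + 1)) * (A * exp (nu * Rabs l) / (N + 1)))
          by (apply Rmult_le_compat; try nra; apply Rmult_le_compat; nra).
        simpl. lra. }
      assert (Vp : VV n lp <= A^3 / N^3 * exp (mu * Rabs lp)).
      { eapply Rle_trans; [apply VV_le|]. fold A nu N. right.
        rewrite hmunu, Rmult_assoc, <- exp_cube. field. lra. }
      assert (Vm : VV n lm <= A^3 / N^3 * exp (mu * Rabs lm)).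
      { eapply Rle_trans; [apply VV_le|]. fold A nu N. right.
        rewrite hmunu, Rmult_assoc, <- exp_cube. field. lra. }
      assert (Ap : pi1 * exp (mu * Rabs lp) <= exp (mu * Rabs l) * exp (/ 2 * a + / 2 * b + mu * (a - b))).
      { unfold pi1. rewrite <- !exp_plus. apply exp_le'.
        assert (Rabs lp <= Rabs l + (a - b)).
        { unfold lp. pose proof (Rabs_triang l (a - b)) as TR. rewrite (Rabs_right (a - b)) in TR by lra. lra. }
        nra. }
      assert (Am : pi2 * exp (mu * Rabs lm) <= exp (mu * Rabs l) * exp (/ 2 * c' + / 2 * e + mu * (e - c'))).
      { unfold pi2. rewrite <- !exp_plus. apply exp_le'.
        assert (Rabs lm <= Rabs l + (e - c')).
        { unfold lm. pose proof (Rabs_triang l (c' - e)) as TR. rewrite (Rabs_left1 (c' - e)) in TR by lra. lra. }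
        nra. }
      assert (0 <= A^3 / N^3) by (apply Rdiv_le_0_compat; nra).
      assert (KEY : pi1 * VV n lp + pi2 * VV n lm <= A^3 / N^3 * exp (mu * Rabs l) * (1 - 3 / (A * exp (nu * Rabs l)))).
      { assert (pi1 * VV n lp <= A^3 / N^3 * (pi1 * exp (mu * Rabs lp)))
          by (pose proof (Rmult_le_compat_l pi1 _ _ (Rlt_le _ _ hpi1) Vp); nra).
        assert (pi2 * VV n lm <= A^3 / N^3 * (pi2 * exp (mu * Rabs lm)))
          by (pose proof (Rmult_le_compat_l pi2 _ _ (Rlt_le _ _ hpi2) Vm); nra).
        pose proof (exp_pos (mu * Rabs l)).
        assert (A^3 / N^3 * (pi1 * exp (mu * Rabs lp)) + A^3 / N^3 * (pi2 * exp (mu * Rabs lm))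
                <= A^3 / N^3 * (exp (mu * Rabs l) * (exp (/ 2 * a + / 2 * b + mu * (a - b)) + exp (/ 2 * c' + / 2 * e + mu * (e - c'))))).
        { rewrite <- Rmult_plus_distr_l. apply Rmult_le_compat_l; lra. }
        assert (exp (mu * Rabs l) * (exp (/ 2 * a + / 2 * b + mu * (a - b)) + exp (/ 2 * c' + / 2 * e + mu * (e - c')))
                <= exp (mu * Rabs l) * (1 - 3 / (A * exp (nu * Rabs l)))) by (apply Rmult_le_compat_l; lra).
        assert (A^3 / N^3 * (exp (mu * Rabs l) * (exp (/ 2 * a + / 2 * b + mu * (a - b)) + exp (/ 2 * c' + / 2 * e + mu * (e - c')))) <=
                A^3 / N^3 * (exp (mu * Rabs l) * (1 - 3 / (A * exp (nu * Rabs l))))) by (apply Rmult_le_compat_l; lra).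
        lra. }
      eapply Rle_trans; [exact KEY|].
      pose proof (cube_step N (A * exp (nu * Rabs l)) (A^3 * exp (mu * Rabs l)) hN1 ltac:(lra) ltac:(apply Rmult_le_pos; [apply pow_le; lra | left; apply exp_pos])) as CS.
      replace ((A * exp (nu * Rabs l) / (N + 1)) ^ 3) with (A ^ 3 * exp (mu * Rabs l) / (N + 1) ^ 3)
        by (rewrite hmunu, Rmult_assoc, <- exp_cube; field; lra).
      replace (A ^ 3 / N ^ 3 * exp (mu * Rabs l) * (1 - 3 / (A * exp (nu * Rabs l)))) with
        (A ^ 3 * exp (mu * Rabs l) / N ^ 3 * (1 - 3 / (A * exp (nu * Rabs l)))) by (field; lra).
      exact CS.
Qed.

End Main.


Theorem proposition2 (Gp Gm : R -> R) :
  llr_pair Gp Gm ->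
  unbounded_signals Gp Gm ->
  (exists c k x0, 0 < c /\ 0 < k /\ 0 < x0 /\
     forall x, x0 < x ->
       Gm (- x) = c * Rpower x (- k) /\ Gp x = 1 - c * Rpower x (- k)) ->
  exists kappa, 0 < kappa /\
    forall t : nat, (1 <= t)%nat ->
      prob_wrong Gp Gm t < kappa * Rpower (INR t) (- (21 / 10)).
Proof.
  intros HL HU [c [k [x0 [hc [hk [hx0 HT]]]]]].
  assert (H : hyps Gp Gm c k x0) by (exact (conj HL (conj HU (conj hc (conj hk (conj hx0 HT)))))).
  destruct (consts _ _ c k x0 H) as [h1 [h2 [h3 [h4 [h5 [h6 [h7 h8]]]]]]].
  set (A := A0 Gp Gm c k x0) in *.
  assert (hA3 : 1 <= A^3) by (simpl; assert (1 <= A * A) by nra; nra).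
  exists (A^3 + 1). split; [lra|].
  intros t ht. unfold prob_wrong.
  pose proof (bound_all _ _ c k x0 H (t - 1) 0) as B.
  pose proof (VV_le Gp Gm c k x0 (t - 1) 0) as V. fold A in V.
  replace (S (t - 1)) with t in V by lia.
  rewrite Rabs_R0, Rmult_0_r, exp_0, Rmult_1_r in V.
  replace (- 0 / 2) with 0 in B by field. rewrite exp_0, Rmult_1_l in B.
  assert (ht1 : 1 <= INR t) by (apply (le_INR 1); lia).
  assert (R3 : Rpower (INR t) (Ropp 3) <= Rpower (INR t) (- (21/10))) by (apply Rle_Rpower; lra).
  assert (E3 : Rpower (INR t) (Ropp 3) = / (INR t ^ 3)).
  { rewrite Rpower_Ropp. f_equal. replace 3 with (INR 3) by (simpl; ring). apply Rpower_pow. lra. }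
  rewrite E3 in R3.
  assert ((A / INR t) ^ 3 = A^3 * / (INR t ^ 3)) by (field; lra).
  assert (0 < / (INR t ^ 3)) by (apply Rinv_0_lt_compat; apply pow_lt; lra).
  assert (A^3 * / (INR t ^ 3) < (A^3 + 1) * / (INR t ^ 3)) by nra.
  assert ((A^3 + 1) * / (INR t ^ 3) <= (A^3 + 1) * Rpower (INR t) (- (21 / 10))) by (apply Rmult_le_compat_l; lra).
  lra.
Qed.
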